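(* For each positive integer $n$ there is a multiplicative function $f_n$ from the positive integers to the positive integers, with $f_n(p^{k-1})\le f_n(p^k)$ for all primes $p$ and integers $k\ge1$, such that the set of $f_n$-practical numbers has asymptotic density $1-\varphi(n)/n$.
   Context: $\varphi$ is Euler's totient function. $f$ multiplicative means $f(1)=1$ and $f(ab)=f(a)f(b)$ for coprime $a,b$. $S_f(N)=\sum_{d\mid N} f(d)$. A positive integer $N$ is $f$-practical if every positive integer $m\le S_f(N)$ equals $\sum_{d\in\mathcal{D}}f(d)$ for some set $\mathcal{D}$ of distinct divisors of $N$. *)

(* Defs.v *)
From Stdlib Require Import Reals.
From mathcomp Require Import all_boot.
Set Implicit Arguments. Unset Strict Implicit. Unset Printing Implicit Defensive.

Definition multiplicative (f : nat -> nat) : Prop :=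
  f 1 = 1 /\
  forall a b, 0 < a -> 0 < b -> coprime a b -> f (a * b) = f a * f b.

Definition Sf (f : nat -> nat) (N : nat) : nat := \sum_(d <- divisors N) f d.

(* N is f-practical: every 1 <= m <= S_f(N) is a sum of f(d) over a set
   of distinct divisors d of N. Divisors of N (N > 0) lie in 'I_N.+1. *)
Definition f_practical (f : nat -> nat) (N : nat) : bool :=
  [forall m : 'I_(Sf f N).+1, (0 < m) ==>
     [exists D : {set 'I_N.+1},
        (D \subset [set d : 'I_N.+1 | nat_of_ord d %| N]) &&
        (\sum_(d in D) f d == m)]].

Definition count_practical (f : nat -> nat) (x : nat) : nat :=
  count (f_practical f) (iota 1 x).

Definition has_density_practical (f : nat -> nat) (l : R) : Prop :=
  Un_cv (fun x => Rdiv (INR (count_practical f x)) (INR x)) l.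

(* Main.v *)
Require Import Defs.
From Stdlib Require Import Reals.
From mathcomp Require Import all_boot.
From mathcomp Require Import zify.
From Stdlib Require Import Lra Lia.
Set Implicit Arguments. Unset Strict Implicit. Unset Printing Implicit Defensive.

Section F.
Variable n : nat.
Definition fn (m : nat) : nat := 3 ^ count (fun p => ~~ (p %| n)) (primes m).

Lemma fn_gt0 m : 0 < fn m.
Proof. by rewrite /fn expn_gt0. Qed.

Lemma fn1 : fn 1 = 1.
Proof. by []. Qed.

Lemma fn_mul a b : 0 < a -> 0 < b -> coprime a b -> fn (a * b) = fn a * fn b.
Proof.
move=> a0 b0 co; rewrite /fn -expnD -count_cat.
congr (3 ^ _); apply/permP.
apply: uniq_perm => [||p]; first exact: primes_uniq.
  by rewrite cat_uniq !primes_uniq -coprime_has_primes // co.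
by rewrite mem_cat primesM.
Qed.

Lemma fn_mult : multiplicative fn.
Proof. split; [exact: fn1 | exact: fn_mul]. Qed.

Lemma fn_pow p k : prime p -> 0 < k -> fn (p ^ k) = if p %| n then 1 else 3.
Proof. by move=> pp k0; rewrite /fn primesX // primes_prime //= addn0; case: (p %| n). Qed.

Lemma fn_mono p k : prime p -> 0 < k -> fn (p ^ k.-1) <= fn (p ^ k).
Proof.
move=> pp; case: k => // [[|k]] _ /=; first by rewrite fn1 fn_gt0.
by rewrite !fn_pow.
Qed.

Lemma fn_pow_le3 p k : prime p -> fn (p ^ k) <= 3.
Proof. by move=> pp; case: k => [|k]; rewrite ?fn1 // fn_pow //; case: (p %| n). Qed.

Lemma fn_pow_n p k : prime p -> p %| n -> fn (p ^ k) = 1.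
Proof. by move=> pp pn; case: k => [|k]; rewrite ?fn1 // fn_pow // pn. Qed.

Lemma fn_cop d : 1 < d -> coprime d n -> 3 <= fn d.
Proof.
move=> d1 co; rewrite /fn; set c := count _ _.
have : 0 < c.
  rewrite -has_count; apply/hasP; exists (pdiv d).
    by rewrite mem_primes pdiv_prime // pdiv_dvd (ltnW d1).
  apply/negP => pn.
  have : pdiv d %| gcdn d n by rewrite dvdn_gcd pdiv_dvd.
  by rewrite (eqP co) dvdn1 => /eqP h; move: (pdiv_prime d1); rewrite h.
by case: c => // c _; rewrite expnS -[3]muln1 leq_mul // expn_gt0.
Qed.
End F.

Lemma cover_sum (g : nat -> nat) S (r : seq nat) : uniq r -> (forall x, x \in r -> g x <= S.+1) ->
  forall m, m <= S + S * \sum_(x <- r) g x ->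
  exists s : nat -> nat, (forall x, s x <= S) /\ exists2 s0, s0 <= S & m = s0 + \sum_(x <- r) g x * s x.
Proof.
elim: r => [|x r IH] /=.
  move=> _ _ m; rewrite big_nil muln0 addn0 => hm.
  by exists (fun _ => 0); split=> //; exists m => //; rewrite big_nil addn0.
move=> /andP[xr ur] hg m; rewrite big_cons => hm.
have hg' : forall y, y \in r -> g y <= S.+1 by move=> y yr; apply: hg; rewrite inE yr orbT.
have gx : g x <= S.+1 by apply: hg; rewrite inE eqxx.
set R := \sum_(y <- r) g y in hm.
pose t := if g x * S <= m then S else m %/ g x.
have [tS [tm hm']] : t <= S /\ g x * t <= m /\ m - g x * t <= S + S * R.
  rewrite /t; case: ifP => h.
    split=> //; split=> //. rewrite mulnDr in hm. lia.
  have gx0 : 0 < g x by case: (g x) h => //; rewrite mul0n.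
  have hlt : m < g x * S by rewrite ltnNge h.
  split; first by rewrite -ltnS ltn_divLR // mulSn; nia.
  split; first by rewrite [g x * _]mulnC leq_divM.
  have : m %% g x < g x by rewrite ltn_mod.
  have := divn_eq m (g x). lia.
have [s [hs [s0 s0S e]]] := IH ur hg' _ hm'.
exists (fun y => if y == x then t else s y); split.
  by move=> y; case: (y == x).
exists s0 => //; rewrite big_cons eqxx.
have -> : \sum_(y <- r) g y * (if y == x then t else s y) = \sum_(y <- r) g y * s y.
  apply: eq_big_seq => y yr; case: eqP => // yx; by move: xr; rewrite -yx yr.
lia.
Qed.

Lemma gcd_mul_cop a b A B : a %| A -> b %| B -> coprime A B -> gcdn (a * b) A = a.
Proof.
move=> aA bB co.
rewrite gcdnC Gauss_gcdl; first by apply/gcdn_idPr.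
by apply: coprime_dvdr bB _.
Qed.

Lemma divisorsM A B : 0 < A -> 0 < B -> coprime A B ->
  perm_eq (divisors (A * B)) [seq a * b | a <- divisors A, b <- divisors B].
Proof.
move=> A0 B0 co.
apply: uniq_perm; first exact: divisors_uniq.
  apply: allpairs_uniq; try exact: divisors_uniq.
  move=> [a b] [a' b'] /allpairsP[[x y] /= [xA yB [-> ->]]] /allpairsP[[x' y'] /= [xA' yB' [-> ->]]] /= e.
  rewrite -!dvdn_divisors // in xA yB xA' yB'.
  have ex : x = x' by rewrite -(gcd_mul_cop xA yB co) e (gcd_mul_cop xA' yB' co).
  have ey : y = y'.
    rewrite coprime_sym in co.
    by rewrite -(gcd_mul_cop yB xA co) mulnC e mulnC (gcd_mul_cop yB' xA' co).
  by rewrite ex ey.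
move=> d; rewrite -dvdn_divisors ?muln_gt0 ?A0 //.
apply/idP/allpairsP => [dAB | [[a b] /= [aA bB ->]]]; last first.
  by rewrite -!dvdn_divisors // in aA bB; apply: dvdn_mul.
exists (gcdn d A, gcdn d B) => /=; split; rewrite -?dvdn_divisors ?dvdn_gcdr //.
apply/eqP; rewrite eqn_dvd; apply/andP; split.
  rewrite muln_gcdl !muln_gcdr !dvdn_gcd dAB dvdn_mull // dvdn_mulr //.
  by rewrite dvdn_mull.
rewrite Gauss_dvd ?dvdn_gcdl //.
apply: coprime_dvdl (dvdn_gcdr _ _) _; apply: coprime_dvdr (dvdn_gcdr _ _) _; exact: co.
Qed.

Lemma big_divisorsM A B (F : nat -> nat) : 0 < A -> 0 < B -> coprime A B ->
  \sum_(d <- divisors (A * B)) F d = \sum_(a <- divisors A) \sum_(b <- divisors B) F (a * b).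
Proof.
move=> A0 B0 co; rewrite (perm_big _ (divisorsM A0 B0 co)).
by rewrite -(map_allpairs (uncurry muln) pair) big_map big_allpairs.
Qed.


Lemma fchoice (Q : nat -> pred nat -> Prop) (r : seq nat) :
  (forall b, b \in r -> exists P, Q b P) -> exists G : nat -> pred nat, forall b, b \in r -> Q b (G b).
Proof.
elim: r => [|x r IH] h; first by exists (fun _ => pred0).
have [P hP] := h x (mem_head _ _).
have [G hG] : exists G : nat -> pred nat, forall b, b \in r -> Q b (G b).
  by apply: IH => b br; apply: h; rewrite inE br orbT.
exists (fun b => if b == x then P else G b) => b; rewrite inE.
by case: eqP => [-> //| _ /= br]; apply: hG.
Qed.

Section Gen.
Variable f : nat -> nat.
Hypothesis f1 : f 1 = 1.
Hypothesis fmul : forall a b, 0 < a -> 0 < b -> coprime a b -> f (a * b) = f a * f b.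

Definition rep N m := exists P : pred nat, \sum_(d <- divisors N | P d) f d = m.
Definition complete N := forall m, m <= Sf f N -> rep N m.

Lemma div_gt0 d N : 0 < N -> d \in divisors N -> 0 < d.
Proof. by move=> N0; rewrite -dvdn_divisors // => /dvdn_gt0; apply. Qed.

Lemma SfM A B : 0 < A -> 0 < B -> coprime A B -> Sf f (A * B) = Sf f A * Sf f B.
Proof.
move=> A0 B0 co; rewrite /Sf big_divisorsM // big_distrl /=.
apply: eq_big_seq => a aA; rewrite big_distrr /=; apply: eq_big_seq => b bB.
apply: fmul; try exact: div_gt0 aA; try exact: div_gt0 bB.
rewrite -dvdn_divisors // in aA; rewrite -dvdn_divisors // in bB.
by apply: coprime_dvdl aA _; apply: coprime_dvdr bB _.
Qed.

Lemma complete_mul A B : 0 < A -> 0 < B -> coprime A B -> complete A ->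
  (forall b, b %| B -> f b <= (Sf f A).+1) -> complete (A * B).
Proof.
move=> A0 B0 co cA hB m; rewrite SfM // => hm.
set S := Sf f A in hm hB.
pose r := [seq b <- divisors B | b != 1].
have split1 : forall F : nat -> nat, \sum_(b <- divisors B) F b = F 1 + \sum_(b <- r) F b.
  by move=> F; rewrite big_filter (bigD1_seq 1) ?divisor1 ?divisors_uniq.
have ur : uniq r by rewrite filter_uniq ?divisors_uniq.
have hr : forall x, x \in r -> f x <= S.+1.
  by move=> x; rewrite mem_filter -dvdn_divisors // => /andP[_ ]; apply: hB.
have hm' : m <= S + S * \sum_(x <- r) f x by move: hm; rewrite /Sf split1 f1 mulnDr muln1.
have [s [hs [s0 s0S e]]] := cover_sum ur hr hm'.
pose t b := if b == 1 then s0 else s b.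
have ht : forall b, t b <= S by move=> b; rewrite /t; case: (b == 1).
have [G hG] := @fchoice (fun b P => \sum_(d <- divisors A | P d) f d = t b) (divisors B)
  (fun b _ => cA (t b) (ht b)).
exists (fun d => G (gcdn d B) (gcdn d A)).
rewrite big_mkcond /= big_divisorsM //.
have -> : \sum_(a <- divisors A) \sum_(b <- divisors B)
    (if G (gcdn (a * b) B) (gcdn (a * b) A) then f (a * b) else 0) =
    \sum_(a <- divisors A) \sum_(b <- divisors B) (f b * (if G b a then f a else 0)).
  apply: eq_big_seq => a aA; apply: eq_big_seq => b bB.
  have aA' := aA; have bB' := bB.
  rewrite -dvdn_divisors // in aA'; rewrite -dvdn_divisors // in bB'.
  rewrite (gcd_mul_cop aA' bB' co).
  have coBA : coprime B A by rewrite coprime_sym.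
  rewrite mulnC (gcd_mul_cop bB' aA' coBA).
  case: (G b a); rewrite ?muln0 //.
  rewrite fmul //.
  - exact: div_gt0 bB.
  - exact: div_gt0 aA.
  by apply: coprime_dvdl bB' _; apply: coprime_dvdr aA' _.
rewrite exchange_big /=.
have -> : \sum_(b <- divisors B) \sum_(a <- divisors A) (f b * (if G b a then f a else 0)) =
          \sum_(b <- divisors B) f b * t b.
  apply: eq_big_seq => b bB; rewrite -big_distrr /=; congr (_ * _).
  by rewrite -(hG b bB) [in RHS]big_mkcond.
rewrite split1 /t eqxx f1 mul1n e; congr (_ + _).
apply: eq_big_seq => b; rewrite mem_filter => /andP[/negbTE -> _] //.
Qed.
End Gen.


Section Gen2.
Variable f : nat -> nat.
Hypothesis f1 : f 1 = 1.
Hypothesis fmul : forall a b, 0 < a -> 0 < b -> coprime a b -> f (a * b) = f a * f b.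
Hypothesis fpos : forall m, 0 < f m.
Hypothesis fpp : forall p k, prime p -> f (p ^ k) <= 3.

Lemma Sf_split N F : 0 < N -> \sum_(d <- divisors N) F d = F 1 + \sum_(d <- divisors N | d != 1) F d.
Proof. by move=> N0; rewrite (bigD1_seq 1) ?divisor1 ?divisors_uniq. Qed.

Lemma Sf_ge1 N : 0 < N -> 1 <= Sf f N.
Proof. by move=> N0; rewrite /Sf Sf_split // f1 leq_addr. Qed.

Lemma Sf_ge2 N : 1 < N -> 2 <= Sf f N.
Proof.
move=> N1; have N0 : 0 < N by apply: ltnW.
rewrite /Sf Sf_split // f1 add1n ltnS -big_filter.
rewrite (bigD1_seq N) ?filter_uniq ?divisors_uniq //=.
  by apply: leq_trans (fpos N) (leq_addr _ _).
by rewrite mem_filter divisors_id // andbT neq_ltn N1 orbT.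
Qed.

Lemma complete1 : complete f 1.
Proof.
move=> m; rewrite /Sf (_ : divisors 1 = [:: 1]) // big_seq1 f1.
case: m => [|[|]] // _.
  by exists pred0; rewrite (_ : divisors 1 = [:: 1]) // big_mkcond big_seq1.
by exists predT; rewrite (_ : divisors 1 = [:: 1]) // big_mkcond big_seq1 f1.
Qed.

Lemma complete_all A : 0 < A -> complete f A -> 2 <= Sf f A ->
  forall B, 0 < B -> coprime A B -> complete f (A * B).
Proof.
move=> A0 cA SA B; elim/ltn_ind: B => B IH B0 co.
have [B1 | B1] := leqP B 1.
  have -> : B = 1 by apply/eqP; rewrite eqn_leq B1 B0.
  by rewrite muln1.
set q := pdiv B.
have qp : prime q by apply: pdiv_prime.
have qB : q %| B by apply: pdiv_dvd.
pose B' := B`_q^'.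
have eB : B = B' * B`_q by rewrite mulnC partnC.
have B'0 : 0 < B' by apply: part_gt0.
have Bq1 : 1 < B`_q by rewrite p_part_gt1 mem_primes qp B0 qB.
have B'B : B' < B.
  by rewrite [X in _ < X]eB -[X in X < _]muln1 ltn_pmul2l.
have coB' : coprime A B' by apply: coprime_dvdr (dvdn_part _ _) co.
have cAB' := IH B' B'B B'0 coB'.
rewrite eB mulnA.
have AB'0 : 0 < A * B' by rewrite muln_gt0 A0.
apply: complete_mul => //.
  rewrite coprimeMl; apply/andP; split.
    by apply: coprime_dvdr (dvdn_part _ _) co.
  by rewrite coprime_sym coprime_partC.
move=> b; rewrite p_part => /(dvdn_pfactor _ _ qp) [i _ ->].
apply: leq_trans (fpp i qp) _.
rewrite SfM // ltnS.
apply: leq_trans SA _; rewrite -[X in X <= _]muln1 leq_mul // Sf_ge1 //.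
Qed.
End Gen2.


Lemma sum_set N (P : pred nat) (f : nat -> nat) : 0 < N ->
  \sum_(d in [set d : 'I_N.+1 | P d && (d %| N)]) f d = \sum_(d <- divisors N | P d) f d.
Proof.
move=> N0.
rewrite (eq_bigl (fun d : 'I_N.+1 => P d && (d %| N))); last by move=> d; rewrite inE.
rewrite -(big_mkord (fun i => P i && (i %| N)) f).
have pe : perm_eq (divisors N) [seq i <- index_iota 0 N.+1 | i %| N].
  apply: uniq_perm; first exact: divisors_uniq.
    by rewrite filter_uniq // iota_uniq.
  move=> d; rewrite mem_filter mem_index_iota -dvdn_divisors //.
  case dN: (d %| N) => //=; rewrite ltnS dvdn_leq //.
rewrite (perm_big _ pe) big_filter_cond.
by apply: eq_bigl => i; rewrite andbC.
Qed.

Lemma practical_of_complete f N : 0 < N -> complete f N -> f_practical f N.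
Proof.
move=> N0 cN; apply/forallP => m; apply/implyP => _.
have [P hP] := cN m (ltnSE (ltn_ord m)).
apply/existsP; exists [set d : 'I_N.+1 | P d && (d %| N)].
apply/andP; split.
  by apply/subsetP => d; rewrite !inE => /andP[_ ->].
by rewrite sum_set // hP.
Qed.


Section S.
Variable n : nat.

Lemma fn_complete N : 0 < N -> ~~ coprime N n -> complete (fn n) N.
Proof.
move=> N0 nco.
have g1 : 1 < gcdn N n.
  rewrite ltn_neqAle eq_sym nco /= gcdn_gt0 N0 //.
set p := pdiv (gcdn N n).
have pp : prime p by apply: pdiv_prime.
have pg : p %| gcdn N n by apply: pdiv_dvd.
have pN : p %| N by apply: dvdn_trans pg (dvdn_gcdl _ _).
have pn : p %| n by apply: dvdn_trans pg (dvdn_gcdr _ _).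
have eN : N = N`_p * N`_p^' by rewrite partnC.
have A1 : 1 < N`_p by rewrite p_part_gt1 mem_primes pp N0 pN.
have A0 : 0 < N`_p by apply: part_gt0.
have cA : complete (fn n) N`_p.
  rewrite -[N`_p]mul1n; apply: complete_mul => //.
  - exact: fn_mul.
  - exact: coprime1n.
  - apply: complete1; exact: fn1.
  move=> b; rewrite p_part => /(dvdn_pfactor _ _ pp) [i _ ->].
  by rewrite fn_pow_n.
rewrite eN; apply: complete_all => //.
- exact: fn_mul.
- move=> q k qp; exact: fn_pow_le3.
- apply: Sf_ge2 => //; [exact: fn_gt0].
- exact: coprime_partC.
Qed.

Lemma fn_notprac N : 1 < N -> coprime N n -> ~~ f_practical (fn n) N.
Proof.
move=> N1 co; have N0 : 0 < N by apply: ltnW.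
have S2 : 2 < (Sf (fn n) N).+1 by rewrite ltnS; apply: Sf_ge2 => //; exact: fn_gt0.
apply/negP => /forallP /(_ (Ordinal S2)) /implyP /(_ isT) /existsP [D /andP[sub /eqP e]].
move: e => /=.
have [d /andP[dD d1] | none] := pickP (fun d : 'I_N.+1 => (d \in D) && (val d != 1)).
  rewrite (bigD1 d dD) /=.
  have dN : nat_of_ord d %| N by move/subsetP: sub => /(_ d dD); rewrite inE.
  have dpos : 0 < nat_of_ord d by apply: dvdn_gt0 dN.
  have dgt1 : 1 < nat_of_ord d by rewrite ltn_neqAle eq_sym d1 dpos.
  have := fn_cop dgt1 (coprime_dvdl dN co).
  move=> h3 e; move: (leq_addr (\sum_(i in D | i != d) fn n i) (fn n d)); rewrite e => h.
  by have := leq_trans h3 h.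
have sub1 : D \subset [set (inord 1 : 'I_N.+1)].
  apply/subsetP => d dD; rewrite inE; apply/eqP/val_inj; rewrite /= inordK //.
  by have := none d; rewrite dD /= => /negbFE /eqP.
move: sub1; rewrite subset1 => /orP[/eqP -> | /eqP ->].
  by rewrite big_set1 inordK // fn1.
by rewrite big_set0.
Qed.

Lemma fn_prac_iff N : 0 < N -> f_practical (fn n) N = (N == 1) || ~~ coprime N n.
Proof.
move=> N0; case: (N =P 1) => [-> | N1] /=.
  apply: practical_of_complete => //; apply: complete1; exact: fn1.
case co: (coprime N n) => /=.
  apply/negbTE/fn_notprac => //; rewrite ltn_neqAle eq_sym N0 andbT; exact/eqP.
by apply: practical_of_complete => //; apply: fn_complete; rewrite // co.
Qed.
End S.


Section C.
Variable n : nat.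
Hypothesis n0 : 0 < n.
Definition cc x := count (fun N => coprime N n) (iota 1 x).

Lemma cc_n : cc n = totient n.
Proof.
rewrite totient_count_coprime /cc.
have -> : \sum_(0 <= d < n) coprime n d = count (coprime n) (iota 0 n).
  rewrite -sum1_count [RHS]big_mkcond /index_iota subn0; apply: eq_bigr => d _; by case: coprime.
case: n n0 => // k _.
have e1 : iota 1 k.+1 = iota 1 k ++ [:: k.+1].
  by have := iotaD 1 k 1; rewrite addn1 => ->; rewrite add1n.
rewrite e1 count_cat /= addn0.
have -> : coprime k.+1 k.+1 = coprime k.+1 0 by rewrite /coprime gcdnn gcdn0.
rewrite addnC; congr (_ + _).
by apply: eq_count => i; rewrite coprime_sym.
Qed.

Lemma cc_shift x : cc (n + x) = totient n + cc x.
Proof.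
rewrite /cc iotaD count_cat -/(cc n) cc_n; congr (_ + _).
rewrite addnC iotaDl count_map; apply: eq_count => i /=.
by rewrite /coprime (gcdnC (n + i)) gcdnDl gcdnC.
Qed.

Lemma cc_le x : cc x <= x.
Proof. by rewrite /cc; apply: leq_trans (count_size _ _) _; rewrite size_iota. Qed.

Lemma tot_le : totient n <= n.
Proof. by rewrite -cc_n cc_le. Qed.

Lemma cc_bounds x : cc x * n <= x * totient n + n * n /\ x * totient n <= cc x * n + n * n.
Proof.
elim/ltn_ind: x => x IH.
have [xn | xn] := ltnP x n.
  have h1 := cc_le x; have h2 := tot_le.
  split; nia.
have ex : x = n + (x - n) by rewrite subnKC.
have xlt : x - n < x by rewrite ltn_subrL n0 /=; apply: leq_trans n0 xn.
have [h1 h2] := IH (x - n) xlt.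
rewrite ex cc_shift; nia.
Qed.
End C.

Section Real.
Local Open Scope R_scope.
Lemma real_core (A C X F M eps : R) : 0 < M -> 0 < X -> 0 < eps -> A + C = X + 1 ->
  C * M <= X * F + M * M -> X * F <= C * M + M * M -> (1 + M) / eps < X ->
  Rabs (A / X - (1 - F / M)) < eps.
Proof.
intros Nn X0 heps e b1 b2 hX.
assert (hA : A = X + 1 - C) by lra.
assert (hK : (1 + M) / eps * eps = 1 + M) by (field; lra).
assert (hXe : 1 + M < eps * X).
{ assert (h : (1 + M) / eps * eps < X * eps) by (apply Rmult_lt_compat_r; lra). lra. }
assert (hE : A / X - (1 - F / M) = (M - C * M + X * F) / (X * M)).
{ rewrite hA. field. split; lra. }
rewrite hE.
assert (D0 : 0 < X * M) by (apply Rmult_lt_0_compat; lra).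
assert (hM : M * (1 + M) < M * (eps * X)) by (apply Rmult_lt_compat_l; lra).
apply Rabs_def1.
- apply (Rmult_lt_reg_r (X * M)); [lra|].
  replace ((M - C * M + X * F) / (X * M) * (X * M)) with (M - C * M + X * F) by (field; lra).
  nra.
- apply (Rmult_lt_reg_r (X * M)); [lra|].
  replace ((M - C * M + X * F) / (X * M) * (X * M)) with (M - C * M + X * F) by (field; lra).
  nra.
Qed.

Lemma dens_real (cp c : nat -> nat) (nn t : nat) : (0 < nn)%coq_nat ->
  (forall x, (0 < x)%coq_nat -> (cp x + c x = x + 1)%coq_nat) ->
  (forall x, (c x * nn <= x * t + nn * nn)%coq_nat /\ (x * t <= c x * nn + nn * nn)%coq_nat) ->
  Un_cv (fun x => INR (cp x) / INR x) (1 - INR t / INR nn).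
Proof.
intros hn hcp hb eps heps.
destruct (INR_unbounded ((1 + INR nn) / eps)) as [N HN].
exists (S N). intros x hx. unfold R_dist.
assert (hx0 : (0 < x)%coq_nat) by lia.
assert (Nn : 0 < INR nn) by (apply lt_0_INR; lia).
assert (X0 : 0 < INR x) by (apply lt_0_INR; lia).
assert (XN : INR N <= INR x) by (apply le_INR; lia).
pose proof (hcp x hx0) as e. apply (f_equal INR) in e. rewrite !plus_INR in e. simpl in e.
destruct (hb x) as [b1 b2]. apply le_INR in b1. apply le_INR in b2.
rewrite !plus_INR !mult_INR in b1 b2.
apply (@real_core (INR (cp x)) (INR (c x))); lra.
Qed.
End Real.


Lemma cp_cc n x : 0 < x -> count_practical (fn n) x + cc n x = x + 1.
Proof.
case: x => // k _.
rewrite /count_practical /cc.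
rewrite (@eq_in_count _ _ (fun N => (N == 1) || ~~ coprime N n)); last first.
  by move=> N; rewrite mem_iota => /andP[h _]; apply: fn_prac_iff.
rewrite /= coprime1n /=.
rewrite (@eq_in_count _ _ (predC (fun N => coprime N n)) (iota 2 k)); last first.
  by move=> N; rewrite mem_iota => /andP[h _] /=; case: eqP h => // ->.
have := count_predC (fun N => coprime N n) (iota 2 k); rewrite size_iota.
set a := count (coprime^~ n) _; set b := count (predC _) _; lia.
Qed.

Theorem lemma4p3 : forall n : nat, 0 < n ->
  exists f : nat -> nat,
    multiplicative f /\
    (forall m, 0 < m -> 0 < f m) /\
    (forall p k, prime p -> 0 < k -> f (p ^ k.-1) <= f (p ^ k)) /\
    has_density_practical f (Rminus R1 (Rdiv (INR (totient n)) (INR n))).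
Proof.
move=> n n0; exists (fn n); split; first exact: fn_mult.
split; first by move=> m _; apply: fn_gt0.
split; first by move=> p k pp k0; apply: fn_mono.
rewrite /has_density_practical.
have := @dens_real (count_practical (fn n)) (cc n) n (totient n).
apply.
- by apply/ltP.
- by move=> x /ltP x0; apply: cp_cc.
- move=> x; have [b1 b2] := cc_bounds n0 x.
  by split; apply/leP.
Qed.
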